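(* Let $\lambda$ be a partition of length $r$, $\mu\subset\lambda$ a partition with at most $r$ parts, and $f=(f_1,\dots,f_r)\in\mathbb{Z}_{\ge0}^r$, and assume $\lambda_i-i-f_i\ge\lambda_j-j-f_j$ for all $1\le i<j\le r$. Then \[ \widetilde s_{\lambda/\mu,f}(z|\mathbf b)=\det\left(e^{[f_i|\lambda_i-\mu_j+j-i-f_i-1]}_{\lambda_i-\mu_j+j-i}(z|\tau^{j-\mu_j-1}\mathbf b)\right)_{1\le i,j\le r}. \]
   Context: $\mathbf b=(b_i)_{i\in\mathbb{Z}}$ are independent variables, $z=(z_i)_{i\ge1}$; $\tau^k\mathbf b=(b_{1+k},b_{2+k},\dots)$. For a sequence $y$ and $k\in\mathbb{Z}$, $e^{[k]}_u(y)=\prod_{i=1}^k(1+y_iu)$ ($k\ge0$), $\prod_{i=1}^{|k|}(1-y_iu)^{-1}$ ($k\le0$); $e^{[k|\ell]}_m(z|y)=[u^m]e^{[k]}_u(z)e^{[\ell]}_u(y)$, which is $0$ for $m<0$. A row-strict tableau of $(\lambda/\mu,f)$ fills each box $(i,j)$ with $\mu_i<j\le\lambda_i$ by a positive integer, strictly increasing from left to right along rows, weakly increasing from top to bottom along columns, with all entries of row $i$ at most $f_i$. $\widetilde s_{\lambda/\mu,f}(z|\mathbf b)=\sum_T\prod_{\text{entry }e\text{ in box }(i,j)}(z_e+b_{e+i-j})$, summed over all row-strict tableaux of $(\lambda/\mu,f)$. *)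

(* Defs.v *)
From HB Require Import structures.
From mathcomp Require Import all_boot all_order all_algebra.
Set Implicit Arguments. Unset Strict Implicit. Unset Printing Implicit Defensive.
Import Order.TTheory GRing.Theory Num.Theory.
Local Open Scope ring_scope.

(* Formal power series in u over R, represented by their coefficient
   sequences (coefficient of u^m at index m), with the Cauchy product. *)
Definition ser_mul (R : comNzRingType) (f g : nat -> R) : nat -> R :=
  fun m => \sum_(j < m.+1) f j * g (m - j)%N.
Definition ser_one (R : comNzRingType) : nat -> R := fun m => (m == 0%N)%:R.
Definition ser_1plus (R : comNzRingType) (c : R) : nat -> R :=
  fun m => if m == 0%N then 1 else if m == 1%N then c else 0.
(* the series (1 - c u)^{-1} = sum_m c^m u^m *)
Definition ser_geom (R : comNzRingType) (c : R) : nat -> R := fun m => c ^+ m.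

(* e^{[k]}_u(y) for k in Z; sequences y are indexed from 1 (y i = y_i). *)
Definition e_ser (R : comNzRingType) (k : int) (y : nat -> R) : nat -> R :=
  if (0 <= k)%R then \big[@ser_mul R/@ser_one R]_(i < absz k) ser_1plus (y i.+1)
  else \big[@ser_mul R/@ser_one R]_(i < absz k) ser_geom (y i.+1).

Definition e_bar (R : comNzRingType) (k l m : int) (z y : nat -> R) : R :=
  if (m < 0)%R then 0 else ser_mul (e_ser k z) (e_ser l y) (absz m).

Definition tau (R : comNzRingType) (k : int) (b : int -> R) : nat -> R :=
  fun i => b (i%:Z + k).

(* Rows are 0-based (row i here is row i+1 of the paper), columns 1-based.
   Box (i,j) belongs to lambda/mu iff mu_i < j <= lambda_i. *)
Definition in_shape (lam mu : nat -> nat) (i j : nat) : bool :=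
  (mu i < j)%N && (j <= lam i)%N.

Definition col_bound (r : nat) (lam : nat -> nat) : nat := (\max_(i < r) lam i).+1.
Definition val_bound (r : nat) (f : nat -> nat) : nat := (\max_(i < r) f i).+1.

(* Row-strict tableaux of (lam/mu, f), encoded as finite functions on
   'I_r * 'I_L that vanish outside the shape. *)
Definition is_rs_tableau (r : nat) (lam mu f : nat -> nat) (L M : nat)
    (T : {ffun 'I_r * 'I_L -> 'I_M}) : bool :=
  [&& [forall ij : 'I_r * 'I_L,
        if in_shape lam mu ij.1 ij.2
        then (0 < T ij)%N && (T ij <= f ij.1)%N
        else (T ij == 0%N :> nat)],
      [forall i : 'I_r, forall j : 'I_L, forall j' : 'I_L,
        [&& in_shape lam mu i j, in_shape lam mu i j' & (j < j')%N]
          ==> (T (i, j) < T (i, j'))%N] &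
      [forall i : 'I_r, forall i' : 'I_r, forall j : 'I_L,
        [&& in_shape lam mu i j, in_shape lam mu i' j & (i < i')%N]
          ==> (T (i, j) <= T (i', j))%N]].

Definition tab_weight (R : comNzRingType) (r : nat) (lam mu : nat -> nat) (L M : nat)
    (z : nat -> R) (b : int -> R) (T : {ffun 'I_r * 'I_L -> 'I_M}) : R :=
  \prod_(ij : 'I_r * 'I_L | in_shape lam mu ij.1 ij.2)
     (z (T ij) + b ((T ij)%:Z + (ij.1.+1)%:Z - (ij.2)%:Z)).

Definition tab_type (r : nat) (lam f : nat -> nat) : finType :=
  {ffun 'I_r * 'I_(col_bound r lam) -> 'I_(val_bound r f)}.

Definition stilde (R : comNzRingType) (r : nat) (lam mu f : nat -> nat)
    (z : nat -> R) (b : int -> R) : R :=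
  \sum_(T : tab_type r lam f | is_rs_tableau lam mu f T)
     tab_weight lam mu z b T.

(* Main.v *)
Require Import Defs.
From HB Require Import structures.
From mathcomp Require Import all_boot all_order all_algebra zify ring fingroup perm.
Set Implicit Arguments. Unset Strict Implicit. Unset Printing Implicit Defensive.
Import Order.TTheory GRing.Theory Num.Theory.
Local Open Scope ring_scope.

Section Ser.
Variable R : comNzRingType.
Implicit Types (A W X : nat -> R) (c : R) (y : nat -> R).

Lemma ser_mul_eql A A' W m : (forall j, A j = A' j) ->
  ser_mul A W m = ser_mul A' W m.
Proof. by move=> H; apply: eq_bigr => j _; rewrite H. Qed.

Lemma ser_mul_eqr A W W' m : (forall j, W j = W' j) ->
  ser_mul A W m = ser_mul A W' m.
Proof. by move=> H; apply: eq_bigr => j _; rewrite H. Qed.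

Lemma ser_mulC A W m : ser_mul A W m = ser_mul W A m.
Proof.
rewrite /ser_mul [LHS](reindex_inj rev_ord_inj) /=.
apply: eq_bigr => i _.
rewrite mulrC; congr (_ * _); congr (_ _); have := ltn_ord i; lia.
Qed.

Definition shift A : nat -> R := fun j => if j is j'.+1 then A j' else 0.

Lemma mul1plus A c j : ser_mul A (ser_1plus c) j = A j + c * shift A j.
Proof.
rewrite /ser_mul; case: j => [|j].
  by rewrite big_ord_recr big_ord0 /= /ser_1plus /= add0r mulr1 mulr0 addr0.
rewrite big_ord_recr /= subnn /ser_1plus /= mulr1.
case: j => [|j].
  by rewrite big_ord_recr big_ord0 /= add0r mulrC addrC.
rewrite big_ord_recr /= subSn // subnn /= big1 ?add0r.
  by rewrite addrC mulrC.
move=> i _; have Hi := ltn_ord i.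
rewrite ifF; last by apply/eqP; lia.
by rewrite ifF ?mulr0 //; apply/eqP; lia.
Qed.

Lemma shiftL A W m : ser_mul (shift A) W m = shift (ser_mul A W) m.
Proof.
rewrite /ser_mul; case: m => [|m] /=.
  by rewrite big_ord_recr big_ord0 /= mul0r add0r.
by rewrite big_ord_recl /= mul0r add0r; apply: eq_bigr => i _; rewrite /bump /= add1n subSS.
Qed.

Lemma linL A B c W m : ser_mul (fun j => A j + c * B j) W m = ser_mul A W m + c * ser_mul B W m.
Proof.
rewrite /ser_mul mulr_sumr -big_split /=; apply: eq_bigr => i _.
by rewrite mulrDl mulrA.
Qed.

Lemma L3 A c W m :
  ser_mul (ser_mul A (ser_1plus c)) W m = ser_mul A W m + c * shift (ser_mul A W) m.
Proof.
rewrite (@ser_mul_eql _ (fun j => A j + c * shift A j)); last by move=> j; rewrite mul1plus.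
by rewrite linL shiftL.
Qed.

Lemma mul1plusL A c j : ser_mul (ser_1plus c) A j = A j + c * shift A j.
Proof. by rewrite ser_mulC mul1plus. Qed.

Lemma assocP A W c j :
  ser_mul (ser_mul A W) (ser_1plus c) j = ser_mul A (ser_mul W (ser_1plus c)) j.
Proof.
rewrite mul1plus (@ser_mul_eqr A (ser_mul W (ser_1plus c)) (fun j => W j + c * shift W j)); last by move=> k; rewrite mul1plus.
rewrite [RHS]ser_mulC linL shiftL [ser_mul W A j]ser_mulC; congr (_ + _ * _).
by case: j => [|j] //=; rewrite ser_mulC.
Qed.

Lemma geomS X c j : ser_mul X (ser_geom c) j.+1 = X j.+1 + c * ser_mul X (ser_geom c) j.
Proof.
rewrite /ser_mul big_ord_recr /= subnn /ser_geom expr0 mulr1 addrC; congr (_ + _).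
rewrite mulr_sumr; apply: eq_bigr => i _.
by rewrite subSn ?exprS 1?mulrCA // -ltnS.
Qed.

Lemma L4 X c j : ser_mul (ser_mul X (ser_geom c)) (ser_1plus (- c)) j = X j.
Proof.
rewrite mul1plus; case: j => [|j] /=.
  by rewrite /ser_mul big_ord_recr big_ord0 /= add0r /ser_geom expr0 mulr1 mulr0 addr0.
by rewrite geomS mulNr addrK.
Qed.

Lemma ser_mul0 A W : ser_mul A W 0 = A 0 * W 0.
Proof. by rewrite /ser_mul big_ord_recr big_ord0 /= add0r. Qed.

Lemma cancelP U V c : (forall j, ser_mul U (ser_1plus c) j = ser_mul V (ser_1plus c) j) ->
  forall j, U j = V j.
Proof.
move=> H; elim=> [|j IH].
  by have := H 0%N; rewrite !mul1plus /= !mulr0 !addr0.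
by have := H j.+1; rewrite !mul1plus /= IH => /addIr.
Qed.

Lemma assocG A W d j :
  ser_mul (ser_mul A W) (ser_geom d) j = ser_mul A (ser_mul W (ser_geom d)) j.
Proof.
apply: (@cancelP _ _ (- d)) => k; rewrite L4 assocP.
by apply: ser_mul_eqr => i; rewrite L4.
Qed.

Lemma ser_mul1 A j : ser_mul A (ser_one R) j = A j.
Proof.
rewrite /ser_mul big_ord_recr /= subnn /ser_one eqxx mulr1 big1 ?add0r // => i _.
have Hi := ltn_ord i.
have -> : ((j - i)%N == 0%N) = false by apply/eqP; lia.
by rewrite mulr0.
Qed.

Lemma ser_1mul A j : ser_mul (ser_one R) A j = A j.
Proof. by rewrite ser_mulC ser_mul1. Qed.

Definition Bser n (F : nat -> nat -> R) : nat -> R :=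
  \big[@ser_mul R/@ser_one R]_(i < n) F i.

Lemma Bser_recl n F j : Bser n.+1 F j = ser_mul (F 0%N) (Bser n (fun i => F i.+1)) j.
Proof. exact: (congr1 (fun g => g j) (big_ord_recl n (fun i : 'I_n.+1 => F i))). Qed.

Lemma Bser0 F j : Bser 0 F j = ser_one R j.
Proof. exact: (congr1 (fun g => g j) (@big_ord0 _ (ser_one R) (@ser_mul R) xpredT (fun i : 'I_0 => F i))). Qed.

Lemma Bser_recr n F :
  (forall i A W j, ser_mul (ser_mul A W) (F i) j = ser_mul A (ser_mul W (F i)) j) ->
  forall j, Bser n.+1 F j = ser_mul (Bser n F) (F n) j.
Proof.
elim: n F => [|n IH] F HF j.
  rewrite Bser_recl (@ser_mul_eqr _ _ (ser_one R)); last by move=> k; rewrite Bser0.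
  rewrite ser_mul1 (@ser_mul_eql _ (ser_one R)); last by move=> k; rewrite Bser0.
  by rewrite ser_1mul.
rewrite Bser_recl (@ser_mul_eqr _ _ (ser_mul (Bser n (fun i => F i.+1)) (F n.+1))); last first.
  by move=> k; rewrite IH // => i; apply: HF.
rewrite -HF; apply: ser_mul_eql => k.
by rewrite Bser_recl.
Qed.

Lemma bigser0 n (F : nat -> nat -> R) : (forall i, F i 0%N = 1) -> Bser n F 0%N = 1.
Proof.
elim: n F => [|n IH] F HF; first by rewrite Bser0.
by rewrite Bser_recl ser_mul0 IH ?HF ?mulr1.
Qed.

Lemma e_serE k y j : e_ser k y j =
  (if (0 <= k)%R then Bser (absz k) (fun i => ser_1plus (y i.+1))
   else Bser (absz k) (fun i => ser_geom (y i.+1))) j.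
Proof. by rewrite /e_ser; case: ifP. Qed.

Lemma e_ser0 k y : e_ser k y 0%N = 1 :> R.
Proof.
by rewrite e_serE; case: ifP => _; apply: bigser0 => i //; rewrite /ser_geom expr0.
Qed.

Lemma ser_mul_deg A W d1 d2 m : (forall j, (d1 < j)%N -> A j = 0) ->
  (forall j, (d2 < j)%N -> W j = 0) -> (d1 + d2 < m)%N -> ser_mul A W m = 0.
Proof.
move=> HA HW Hm; apply: big1 => i _.
case: (ltnP d1 i) => Hi; first by rewrite HA ?mul0r.
rewrite HW ?mulr0 //; have := ltn_ord i; lia.
Qed.

Lemma e_ser_deg (n : nat) y j : (n < j)%N -> e_ser n%:Z y j = 0 :> R.
Proof.
rewrite e_serE /=; elim: n j => [|n IH] j Hj.
  by rewrite Bser0 /ser_one; case: j Hj.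
rewrite Bser_recr; last by move=> *; apply: assocP.
rewrite mul1plus IH; last by lia.
case: j Hj => [|j] //= Hj.
by rewrite IH ?mulr0 ?add0r //; lia.
Qed.

Definition cz (F : nat -> R) (m : int) : R := if (m < 0)%R then 0 else F (absz m).

Lemma czL3 A c W m :
  cz (ser_mul (ser_mul A (ser_1plus c)) W) m = cz (ser_mul A W) m + c * cz (ser_mul A W) (m - 1).
Proof.
rewrite /cz; case: (ltrP m 0) => Hm.
  by rewrite ifT ?mulr0 ?addr0 //; lia.
rewrite L3; congr (_ + _ * _).
case: (ltrP (m - 1) 0) => Hm1.
  by have -> : m = 0 by lia.
have -> : absz m = (absz (m - 1)).+1 by lia.
by [].
Qed.

Lemma e_ser_pos (n : nat) y j :
  e_ser (n.+1)%:Z y j = ser_mul (e_ser n%:Z y) (ser_1plus (y n.+1)) j.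
Proof.
rewrite e_serE /= Bser_recr; last by move=> *; apply: assocP.
by apply: ser_mul_eql => i; rewrite e_serE.
Qed.

Lemma e_ser_negS (n : nat) y j :
  e_ser (- (n.+1)%:Z) y j = ser_mul (e_ser (- n%:Z) y) (ser_geom (y n.+1)) j.
Proof.
rewrite e_serE /= Bser_recr; last by move=> *; apply: assocG.
apply: ser_mul_eql => i; rewrite e_serE.
by case: n => [|n] //=; rewrite !Bser0.
Qed.

Definition cY (l : int) (y : nat -> R) : R :=
  if (0 < l)%R then y (absz l) else - y (absz l).+1.

Lemma Ystep l y j : e_ser l y j = ser_mul (e_ser (l - 1) y) (ser_1plus (cY l y)) j.
Proof.
rewrite /cY; case: (ltrP 0 l) => Hl.
  have [n ->] : exists n : nat, l = (n.+1)%:Z by exists (absz l).-1; lia.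
  by rewrite e_ser_pos /=; congr (ser_mul (e_ser _ _) _ _); lia.
have [n ->] : exists n : nat, l = - n%:Z by exists (absz l); lia.
have -> : - n%:Z - 1 = - (n.+1)%:Z by lia.
have -> : absz (- n%:Z) = n by lia.
rewrite -(L4 (e_ser (- n%:Z) y) (y n.+1) j).
by apply: ser_mul_eql => i; rewrite e_ser_negS.
Qed.

Lemma cz_eq F G m : (forall j, F j = G j) -> cz F m = cz G m.
Proof. by move=> H; rewrite /cz H. Qed.

Lemma e_bar_cz k l m z y : e_bar k l m z y = cz (ser_mul (e_ser k z) (e_ser l y)) m.
Proof. by []. Qed.

Lemma e_bar_deg (k l : nat) m z y : ((k + l)%:Z < m)%R -> e_bar k%:Z l%:Z m z y = 0.
Proof.
move=> Hm; rewrite /e_bar ifF; last by apply/negbTE; rewrite -leNgt; lia.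
apply: (@ser_mul_deg _ _ k l); first by move=> j Hj; apply: e_ser_deg.
  by move=> j Hj; apply: e_ser_deg.
lia.
Qed.

Lemma E_rec (f' : nat) (m : int) z y c0 :
  (m <= (f'.+1)%:Z -> c0 = z f'.+1 + y (absz ((f'.+1)%:Z - m + 1))) ->
  e_bar (f'.+1)%:Z (m - (f'.+1)%:Z - 1) m z y =
  e_bar f'%:Z (m - f'%:Z - 1) m z y + c0 * e_bar f'%:Z (m - 1 - f'%:Z - 1) (m - 1) z y.
Proof.
move=> Hc.
set l := m - (f'.+1)%:Z - 1.
have -> : m - f'%:Z - 1 = l + 1 by rewrite /l; lia.
have -> : m - 1 - f'%:Z - 1 = l by rewrite /l; lia.
have HW : (m <= (f'.+1)%:Z)%R \/ e_bar f'%:Z l (m - 1) z y = 0.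
  case: (lerP m (f'.+1)%:Z) => Hm; [by left | right].
  have -> : l = (absz l)%:Z by rewrite /l; lia.
  by apply: e_bar_deg; rewrite /l; lia.
rewrite !e_bar_cz.
set A := e_ser f'%:Z z.
rewrite (@cz_eq _ (ser_mul (ser_mul A (ser_1plus (z f'.+1))) (e_ser l y))); last first.
  by move=> j; apply: ser_mul_eql => i; rewrite e_ser_pos.
rewrite czL3.
rewrite (@cz_eq (ser_mul A (e_ser (l + 1) y)) (ser_mul (ser_mul (e_ser l y) (ser_1plus (cY (l + 1) y))) A)); last first.
  move=> j; rewrite ser_mulC; apply: ser_mul_eql => i.
  by rewrite Ystep addrK.
rewrite czL3 (@cz_eq (ser_mul (e_ser l y) A) (ser_mul A (e_ser l y))); last by move=> j; rewrite ser_mulC.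
rewrite (@cz_eq (ser_mul (e_ser l y) A) (ser_mul A (e_ser l y))); last by move=> j; rewrite ser_mulC.
rewrite -!e_bar_cz.
case: HW => [Hm|->]; last by rewrite !mulr0 !addr0.
rewrite (Hc Hm) /cY ifF; last by apply/negbTE; rewrite -leNgt /l; lia.
have -> : (absz (l + 1)).+1 = absz ((f'.+1)%:Z - m + 1) by rewrite /l; lia.
ring.
Qed.

End Ser.

Section Tab.
Variable R : comNzRingType.
Variables (z : nat -> R) (b : int -> R).
Variables (r L M : nat).
Notation tab := {ffun 'I_r * 'I_L -> 'I_M}.

Definition Tgen (lam mu f : nat -> nat) : R :=
  \sum_(T : tab | is_rs_tableau lam mu f T) tab_weight lam mu z b T.

Definition C1 (lam mu f : nat -> nat) (T : tab) :=
  forall ij : 'I_r * 'I_L, if in_shape lam mu ij.1 ij.2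
    then (0 < T ij)%N && (T ij <= f ij.1)%N else (T ij == 0%N :> nat).
Definition C2 (lam mu : nat -> nat) (T : tab) :=
  forall (i : 'I_r) (j j' : 'I_L), in_shape lam mu i j -> in_shape lam mu i j' ->
    (j < j')%N -> (T (i, j) < T (i, j'))%N.
Definition C3 (lam mu : nat -> nat) (T : tab) :=
  forall (i i' : 'I_r) (j : 'I_L), in_shape lam mu i j -> in_shape lam mu i' j ->
    (i < i')%N -> (T (i, j) <= T (i', j))%N.

Lemma tabP lam mu f (T : tab) :
  reflect [/\ C1 lam mu f T, C2 lam mu T & C3 lam mu T] (is_rs_tableau lam mu f T).
Proof.
apply: (iffP and3P) => [[/forallP H1 /forallP H2 /forallP H3] | [H1 H2 H3]]; split.
- by [].
- move=> i j j' Hj Hj' Hjj'.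
  by have /forallP/(_ j)/forallP/(_ j')/implyP := H2 i; apply; rewrite Hj Hj' Hjj'.
- move=> i i' j Hj Hj' Hii'.
  by have /forallP/(_ i')/forallP/(_ j)/implyP := H3 i; apply; rewrite Hj Hj' Hii'.
- by apply/forallP.
- apply/forallP => i; apply/forallP => j; apply/forallP => j'; apply/implyP.
  by case/and3P; apply: H2.
- apply/forallP => i; apply/forallP => i'; apply/forallP => j; apply/implyP.
  by case/and3P; apply: H3.
Qed.

Definition upd (T : tab) (p : 'I_r * 'I_L) (v : 'I_M) : tab :=
  [ffun q => if q == p then v else T q].

Section Rec.
Variables (lam mu f : nat -> nat) (k : nat).
Hypothesis kr : (k < r)%N.
Hypothesis HL : forall i, (i < r)%N -> (lam i < L)%N.
Hypothesis HM : (f k < M)%N.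
Hypothesis Hfk : (0 < f k)%N.
Hypothesis Hmax : forall i, (i < r)%N -> (f i <= f k)%N.
Hypothesis Hlast : forall i, (k < i < r)%N -> (f i < f k)%N.
Hypothesis Hlam : forall i j : nat, (i <= j < r)%N -> (lam j <= lam i)%N.
Hypothesis Hmu : forall i j : nat, (i <= j < r)%N -> (mu j <= mu i)%N.

Let f' := fun i => if i == k then (f i).-1 else f i.
Let lam' := fun i => if i == k then (lam i).-1 else lam i.
Let kk : 'I_r := Ordinal kr.
Let cc : 'I_L := Ordinal (HL kr).
Let N : 'I_M := Ordinal HM.
Let M0 : (0 < M)%N. Proof. by apply: leq_ltn_trans HM. Qed.
Let Z0 : 'I_M := Ordinal M0.

Lemma eq_kc (ij : 'I_r * 'I_L) :
  (ij == (kk, cc)) = (ij.1 == k :> nat) && (ij.2 == lam k :> nat).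
Proof. by case: ij. Qed.

Lemma shape_dec i j : in_shape lam' mu i j = in_shape lam mu i j && ~~ ((i == k) && (j == lam k)).
Proof.
rewrite /in_shape /lam'; case: eqP => [->|_] /=; last by rewrite andbT.
case: (ltnP (mu k) j) => Hj //=.
apply/idP/idP => [H|/andP[H1 /eqP H2]]; last by lia.
by apply/andP; split; [lia | apply/eqP; lia].
Qed.

Lemma ne_part (T : tab) :
  (is_rs_tableau lam mu f T && (T (kk, cc) != N)) = is_rs_tableau lam mu f' T.
Proof.
apply/idP/idP.
- case/andP => /tabP [H1 H2 H3] HN; apply/tabP; split => //.
  move=> [i j] /=; have := H1 (i, j); rewrite /f' /=; case: ifP => Hs //.
  case: eqP => Hi //; case/andP => H0 Hle; apply/andP; split => //.
  have Ei : i = kk by apply: val_inj.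
  rewrite Ei in Hs H0 Hle *; clear Hi Ei.
  have Hks : in_shape lam mu k (lam k).
    by move: Hs; rewrite /in_shape /= => /andP[Ha Hb]; apply/andP; split => //; lia.
  have := H1 (kk, cc); rewrite /= Hks => /andP[_ Hc].
  case: (ltnP j (lam k)) => Hj.
    by have := H2 kk j cc Hs Hks Hj; rewrite /=; lia.
  have Ej : j = cc by apply: val_inj; move: Hs; rewrite /in_shape /=; lia.
  rewrite Ej.
  have : (T (kk, cc) : nat) != N by apply/eqP => E; move/eqP: HN; apply; apply: val_inj.
  by rewrite /=; lia.
- move/tabP => [H1 H2 H3]; apply/andP; split.
    apply/tabP; split => // -[i j]; have := H1 (i, j); rewrite /f' /=.
    case: ifP => // _; case: eqP => // _ /andP[Ha Hb]; apply/andP; split => //; lia.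
  apply/eqP => HN; have := H1 (kk, cc); rewrite /f' /= eqxx HN /=.
  by case: ifP => _; lia.
Qed.

Section Valid.
Hypothesis Hv1 : (mu k < lam k)%N.
Hypothesis Hv2 : (k.+1 < r)%N -> (lam k.+1 < lam k)%N.

Lemma kc_shape : in_shape lam mu kk cc.
Proof. by rewrite /in_shape /= Hv1 leqnn. Qed.

Lemma rm_ok (U : tab) : is_rs_tableau lam mu f U -> U (kk, cc) = N ->
  is_rs_tableau lam' mu f' (upd U (kk, cc) Z0).
Proof.
move=> /tabP [H1 H2 H3] HN; apply/tabP; split.
- move=> [i j]; rewrite ffunE eq_kc shape_dec /=.
  case: (boolP ((i == k :> nat) && (j == lam k :> nat))) => [Hij|Hne]; first by rewrite andbF.
  rewrite andbT; have := H1 (i, j); rewrite /=; case: ifP => // Hs.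
  case/andP => H0 Hle; apply/andP; split => //; rewrite /f'.
  case: eqP => Hi //.
  have Ei : i = kk by apply: val_inj.
  rewrite Ei in Hs H0 Hle *; clear Ei.
  have Hj : (j < lam k)%N.
    by move: Hne Hs; rewrite /in_shape Hi eqxx /= => /eqP Hne /andP[_ Hb]; lia.
  have := H2 kk j cc Hs kc_shape Hj; rewrite HN /=; lia.
- move=> i j j'; rewrite !shape_dec !ffunE !eq_kc /= => /andP[Hs /negbTE ->] /andP[Hs' /negbTE ->].
  by apply: H2.
- move=> i i' j; rewrite !shape_dec !ffunE !eq_kc /= => /andP[Hs /negbTE ->] /andP[Hs' /negbTE ->].
  by apply: H3.
Qed.

Lemma add_ok (T : tab) : is_rs_tableau lam' mu f' T ->
  is_rs_tableau lam mu f (upd T (kk, cc) N).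
Proof.
move=> /tabP [H1 H2 H3]; apply/tabP; split.
- move=> [i j]; rewrite ffunE eq_kc /=.
  case: (boolP ((i == k :> nat) && (j == lam k :> nat))) => [/andP[/eqP Hi /eqP Hj]|Hne].
    have := kc_shape; rewrite /in_shape /= Hi Hj => ->.
    by rewrite /= Hfk leqnn.
  have := H1 (i, j); rewrite shape_dec /= Hne andbT.
  case: ifP => // _ /andP[H0 Hle]; rewrite H0 /=.
  by move: Hle; rewrite /f'; case: eqP => _ //; lia.
- move=> i j j' Hs Hs' Hjj'; rewrite !ffunE !eq_kc /=.
  case: (boolP ((i == k :> nat) && (j == lam k :> nat))) => [/andP[/eqP Hi /eqP Hj]|Hne].
    by move: Hs'; rewrite /in_shape Hi; lia.
  case: ifP => [/andP[/eqP Hi /eqP Hj']|Hne'].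
    have := H1 (i, j); rewrite shape_dec /= Hs Hne /f' Hi eqxx /= => /andP[_ Hle].
    by lia.
  by apply: H2 => //; rewrite shape_dec ?Hs ?Hs' ?(negbTE Hne) ?Hne'.
- move=> i i' j Hs Hs' Hii'; rewrite !ffunE !eq_kc /=.
  case: (boolP ((i == k :> nat) && (j == lam k :> nat))) => [/andP[/eqP Hi /eqP Hj]|Hne].
    have Hk1 : (k.+1 < r)%N by have := ltn_ord i'; lia.
    have := Hv2 Hk1; have := Hlam (i := k.+1) (j := i'); move: Hs'; rewrite /in_shape.
    have := ltn_ord i'; lia.
  case: ifP => [/andP[/eqP Hi' /eqP Hj]|Hne'].
    have := H1 (i, j); rewrite shape_dec /= Hs Hne /= => /andP[_ Hle].
    have := Hmax (ltn_ord i); move: Hle; rewrite /f'; case: eqP => Hik; lia.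
  by apply: H3 => //; rewrite shape_dec ?Hs ?Hs' ?(negbTE Hne) ?Hne'.
Qed.

Lemma weight_upd (T : tab) :
  tab_weight lam mu z b (upd T (kk, cc) N) =
  (z (f k) + b ((f k)%:Z + (k.+1)%:Z - (lam k)%:Z)) * tab_weight lam' mu z b T.
Proof.
rewrite /tab_weight (bigD1 (kk, cc)) /=; last exact: kc_shape.
rewrite ffunE eqxx; congr (_ * _).
apply: eq_big => [[i j]|[i j]]; first by rewrite shape_dec eq_kc.
by rewrite ffunE eq_kc => /andP[_ /negbTE ->].
Qed.

End Valid.

Lemma T_rec : Tgen lam mu f = Tgen lam mu f' +
  (if (mu k < lam k)%N && ((k.+1 < r)%N ==> (lam k.+1 < lam k)%N)
   then (z (f k) + b ((f k)%:Z + (k.+1)%:Z - (lam k)%:Z)) * Tgen lam' mu f' else 0).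
Proof.
rewrite /Tgen (bigID (fun T : tab => T (kk, cc) == N)) /= addrC; congr (_ + _).
  by apply: eq_bigl => T; rewrite ne_part.
case: ifP => [/andP[Hv1 /implyP Hv2] | Hv].
  rewrite (reindex_onto (fun T => upd T (kk, cc) N) (fun T => upd T (kk, cc) Z0)) /=; last first.
    move=> T /andP[_ /eqP HN]; apply/ffunP => q; rewrite !ffunE.
    by case: eqP => [->|].
  rewrite mulr_sumr; apply: eq_big => [T|T _]; last by rewrite weight_upd.
  apply/idP/idP.
    case/andP => /andP[Htab _] /eqP <-; apply: rm_ok => //.
    by rewrite ffunE eqxx.
  move=> Ht; rewrite add_ok //= ffunE eqxx eqxx /=.
  apply/eqP/ffunP => q; rewrite !ffunE; case: eqP => [->|] //.
  move/tabP: Ht => [H1 _ _]; have := H1 (kk, cc); rewrite shape_dec /= !eqxx /= andbF.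
  by move=> /eqP H; apply: val_inj.
apply: big1 => T /andP[/tabP[H1 H2 H3] /eqP HN]; exfalso.
have := H1 (kk, cc); rewrite /= HN /=; case: ifP => Hs; last by move/eqP; lia.
move=> _.
have Hv1 : (mu k < lam k)%N by move: Hs; rewrite /in_shape /=; lia.
move: Hv; rewrite Hv1 /= => /negbT; rewrite negb_imply -leqNgt => /andP[Hk1 Hle].
pose k1 : 'I_r := Ordinal Hk1.
have H4 : (lam k.+1 <= lam k)%N by apply: Hlam; rewrite leqnSn Hk1.
have H5 : (mu k.+1 <= mu k)%N by apply: Hmu; rewrite leqnSn Hk1.
have H6 : (f k.+1 < f k)%N by apply: Hlast; rewrite ltnSn Hk1.
have Hs1 : in_shape lam mu k1 cc by rewrite /in_shape /=; lia.
have := H3 kk k1 cc Hs Hs1 (ltnSn k); have := H1 (k1, cc); rewrite /= Hs1 => /andP[_ Hf1].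
by rewrite HN /=; lia.
Qed.

End Rec.

End Tab.

Section Base.
Variable R : comNzRingType.
Variables (z : nat -> R) (b : int -> R).
Variables (r L M : nat).

Lemma T_base lam mu f (HL : forall i, (i < r)%N -> (lam i < L)%N) (M0 : (0 < M)%N)
  (Hf0 : forall i, (i < r)%N -> f i = 0%N) (Hsub : forall i, (i < r)%N -> (mu i <= lam i)%N) :
  Tgen z b r L M lam mu f = \prod_(i < r) ((lam i == mu i)%:R : R).
Proof.
case: (boolP [forall i : 'I_r, lam i == mu i]) => Hall.
  rewrite [RHS]big1; last by move=> i _; rewrite (eqP (forallP Hall i)) eqxx.
  have Hns : forall (i : 'I_r) (j : nat), in_shape lam mu i j = false.
    by move=> i j; rewrite /in_shape (eqP (forallP Hall i)) ltnNge andNb.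
  rewrite /Tgen (big_pred1 [ffun => Ordinal M0]).
    by rewrite /tab_weight big_pred0 // => ij; rewrite Hns.
  move=> T; apply/tabP/eqP => [[H1 _ _]|->].
    apply/ffunP => q; rewrite ffunE; apply: val_inj => /=.
    by have := H1 q; rewrite Hns => /eqP.
  split.
  - by move=> q; rewrite Hns ffunE.
  - by move=> i j j'; rewrite Hns.
  - by move=> i i' j; rewrite Hns.
move/forallPn: Hall => [i Hi].
rewrite [RHS](bigD1 i) //= (negbTE Hi) mul0r.
apply: big1 => T /tabP[H1 _ _]; exfalso.
have := H1 (i, Ordinal (HL i (ltn_ord i))); rewrite /in_shape /=.
have := Hsub i (ltn_ord i); have := Hf0 i (ltn_ord i).
move: Hi => /eqP Hi Hf Hs.
have -> : (mu i < lam i)%N by lia.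
by rewrite leqnn /= Hf; lia.
Qed.

Definition Mx (lam : nat -> int) (mu f : nat -> nat) : 'M[R]_r :=
  \matrix_(i < r, j < r) e_bar (f i)%:Z
    (lam i - (mu j)%:Z + (j.+1)%:Z - (i.+1)%:Z - (f i)%:Z - 1)
    (lam i - (mu j)%:Z + (j.+1)%:Z - (i.+1)%:Z) z (tau ((j.+1)%:Z - (mu j)%:Z - 1) b).

Lemma Mx_ext lam1 lam2 mu f1 f2 : (forall i, (i < r)%N -> lam1 i = lam2 i) ->
  (forall i, (i < r)%N -> f1 i = f2 i) -> Mx lam1 mu f1 = Mx lam2 mu f2.
Proof. by move=> H1 H2; apply/matrixP => i j; rewrite !mxE H1 ?H2. Qed.

Lemma Mx_rec lam mu f k (kr : (k < r)%N) (Hfk : (0 < f k)%N) :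
  \det (Mx lam mu f) =
  \det (Mx lam mu (fun i => if i == k then (f i).-1 else f i)) +
  (z (f k) + b ((f k)%:Z + (k.+1)%:Z - lam k)) *
  \det (Mx (fun i => if i == k then lam i - 1 else lam i) mu (fun i => if i == k then (f i).-1 else f i)).
Proof.
rewrite -[X in X + _]mul1r.
apply: (@determinant_multilinear _ _ _ _ _ (Ordinal kr)).
- apply/rowP => j; rewrite !mxE /= !eqxx.
  rewrite ?(_ : nat_of_ord (Ordinal kr) = k) // mul1r.
  set f0 := (f k).-1; have Ef : f k = f0.+1 by rewrite /f0; lia.
  rewrite Ef.
  rewrite (@E_rec _ f0 _ _ _ (z f0.+1 + b ((f0.+1)%:Z + (k.+1)%:Z - lam k))); last first.
    move=> Hm; congr (_ + b _); lia.
  congr (e_bar _ _ _ _ _ + _ * e_bar _ _ _ _ _); lia.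
- apply/matrixP => i j; rewrite !mxE.
  have -> : (lift (Ordinal kr) i == k :> nat) = false.
    by apply/negbTE; have := neq_lift (Ordinal kr) i; rewrite eq_sym.
  by [].
- apply/matrixP => i j; rewrite !mxE.
  have -> : (lift (Ordinal kr) i == k :> nat) = false.
    by apply/negbTE; have := neq_lift (Ordinal kr) i; rewrite eq_sym.
  by [].
Qed.

Lemma det_zero_block (A : 'M[R]_r) (k : 'I_r) :
  (forall i j : 'I_r, (k <= i)%N -> (j <= k)%N -> A i j = 0) -> \det A = 0.
Proof.
move=> HA; rewrite /determinant; apply: big1 => s _.
have : [exists i : 'I_r, (k <= i)%N && (s i <= k)%N].
  case: (boolP [exists i : 'I_r, (k <= i)%N && (s i <= k)%N]) => // /existsPn Hn; exfalso.
  pose A0 := [set i : 'I_r | (k <= i)%N].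
  pose B0 := [set j : 'I_r | (k < j)%N].
  have sub : s @: A0 \subset B0.
    apply/subsetP => x /imsetP[i]; rewrite !inE => Hi ->.
    by have := Hn i; rewrite Hi /= -ltnNge.
  have EA : A0 = k |: B0.
    by apply/setP => x; rewrite !inE leq_eqVlt eq_sym -(inj_eq val_inj).
  have := subset_leq_card sub; rewrite card_imset; last exact: perm_inj.
  by rewrite EA cardsU1 inE ltnn /= add1n ltnn.
case/existsP => i /andP[Hi Hsi].
by rewrite (bigD1 i) //= HA // mul0r mulr0.
Qed.

End Base.

Section Main.
Variable R : comNzRingType.
Variables (z : nat -> R) (b : int -> R).
Variables (r L M : nat).
Hypothesis M0 : (0 < M)%N.

Lemma Mx_trig (lam mu f : nat -> nat) (Hf0 : forall i, (i < r)%N -> f i = 0%N)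
  (Hmu : forall i j : nat, (i <= j < r)%N -> (mu j <= mu i)%N)
  (Hsub : forall i : nat, (i < r)%N -> (mu i <= lam i)%N) :
  \det (Mx z b r (fun i => (lam i)%:Z) mu f) = \prod_(i < r) ((lam i == mu i)%:R : R).
Proof.
rewrite det_trig.
  apply: eq_bigr => i _; rewrite mxE Hf0 //.
  have := Hsub i (ltn_ord i); case: (ltngtP (lam i) (mu i)) => H Hs; first by lia.
    rewrite (_ : (lam i)%:Z - (mu i)%:Z + (i.+1)%:Z - (i.+1)%:Z - 0%:Z - 1 = (lam i - mu i - 1)%N%:Z); last by lia.
    by rewrite e_bar_deg //; lia.
  rewrite /e_bar ifF; last by apply/negbTE; rewrite -leNgt; lia.
  have -> : absz ((lam i)%:Z - (mu i)%:Z + (i.+1)%:Z - (i.+1)%:Z)%R = 0%N by lia.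
  by rewrite ser_mul0 !e_ser0 mulr1.
apply/forallP => i; apply/forallP => j; apply/implyP => Hij; rewrite mxE Hf0 //.
have := Hsub i (ltn_ord i); have := Hmu i j; rewrite (ltnW Hij) ltn_ord => /(_ isT) H1 H2.
rewrite (_ : (lam i)%:Z - (mu j)%:Z + (j.+1)%:Z - (i.+1)%:Z - 0%:Z - 1 = (lam i + j - mu j - i - 1)%N%:Z); last by lia.
by apply/eqP; rewrite e_bar_deg //; lia.
Qed.

Theorem gen n : forall lam mu f : nat -> nat,
  (\sum_(i < r) f i)%N = n ->
  (forall i, (i < r)%N -> (lam i < L)%N) -> (forall i, (i < r)%N -> (f i < M)%N) ->
  (forall i j : nat, (i <= j < r)%N -> (lam j <= lam i)%N) ->
  (forall i j : nat, (i <= j < r)%N -> (mu j <= mu i)%N) ->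
  (forall i : nat, (i < r)%N -> (mu i <= lam i)%N) ->
  (forall i j : nat, (i < j < r)%N ->
       (lam j)%:Z - (j.+1)%:Z - (f j)%:Z <= (lam i)%:Z - (i.+1)%:Z - (f i)%:Z) ->
  Tgen z b r L M lam mu f = \det (Mx z b r (fun i => (lam i)%:Z) mu f).
Proof.
elim: n => [|n IH] lam mu f Hsum HL HM Hlam Hmu Hsub Hf.
  have Hf0 : forall i, (i < r)%N -> f i = 0%N.
    move=> i Hi; move: Hsum; rewrite (bigD1 (Ordinal Hi)) //=; lia.
  by rewrite T_base // Mx_trig.
have [k0 Hk0] : exists k0 : 'I_r, (0 < f k0)%N.
  case: (boolP [exists k0 : 'I_r, (0 < f k0)%N]) => [/existsP //|/existsPn Hn].
  move: Hsum; rewrite big1 // => i _; have := Hn i; lia.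
case: (@arg_maxnP _ k0 xpredT (fun i : 'I_r => f i) isT) => km _ Hkm.
have exP : exists k, (k < r)%N && (f k == f km) by exists km; rewrite ltn_ord eqxx.
have ubP : forall i, (i < r)%N && (f i == f km) -> (i <= r)%N by move=> i /andP[Hi _]; lia.
case: (ex_maxnP exP ubP) => k /andP[kr /eqP Hk] Hkmax.
have Hmax : forall i, (i < r)%N -> (f i <= f k)%N.
  by move=> i Hi; rewrite Hk; apply: (Hkm (Ordinal Hi)).
have Hlast : forall i, (k < i < r)%N -> (f i < f k)%N.
  move=> i /andP[Hki Hi]; have := Hmax i Hi; rewrite leq_eqVlt => /orP[/eqP Hei|//].
  by have := Hkmax i; rewrite Hi Hei Hk eqxx => /(_ isT); lia.
have Hfk : (0 < f k)%N by have := Hmax k0 (ltn_ord k0); lia.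
set f' := fun i => if i == k then (f i).-1 else f i.
have Hsum' : (\sum_(i < r) f' i)%N = n.
  rewrite (bigD1 (Ordinal kr)) //= in Hsum; rewrite (bigD1 (Ordinal kr)) //= /f' eqxx.
  rewrite (eq_bigr (fun i : 'I_r => f i)); first by lia.
  by move=> i Hi; rewrite ifF //; apply/negbTE; move: Hi; apply: contra => /eqP Hi; apply/eqP/val_inj.
have HM' : forall i, (i < r)%N -> (f' i < M)%N.
  by move=> i Hi; rewrite /f'; case: eqP => _; have := HM i Hi; lia.
rewrite (T_rec z b kr HL (HM k kr) Hfk Hmax Hlast Hlam Hmu) (Mx_rec _ _ _ _ kr Hfk).
congr (_ + _).
  apply: IH => // i j Hij; rewrite /f'.
  have := Hf i j Hij; move: Hij => /andP[Hij Hjr].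
  have Hir : (i < r)%N by lia.
  have := Hmax i Hir; have : (lam j <= lam i)%N by apply: Hlam; rewrite Hjr andbT ltnW.
  by case: eqP => Hi; case: eqP => Hj; subst; rewrite -?subn1; lia.
case: ifP => [/andP[Hv1 /implyP Hv2] | Hv].
  set lam' := fun i => if i == k then (lam i).-1 else lam i.
  rewrite IH //.
  - congr (_ * \det _); apply: Mx_ext => // i _; rewrite /lam'.
    by case: eqP => [->|]; lia.
  - by move=> i Hi; rewrite /lam'; case: eqP => _; have := HL i Hi; lia.
  - move=> i j /andP[Hij Hjr]; rewrite /lam'.
    have := Hlam i j; rewrite Hij Hjr => /(_ isT).
    case: eqP => Hi; case: eqP => Hj //; rewrite ?Hi ?Hj -?subn1; try lia.
    have Hk1 : (k.+1 < r)%N by lia.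
    have Hkj : (k.+1 <= j)%N by lia.
    have := Hv2 Hk1; have := Hlam k.+1 j; rewrite Hkj Hjr => /(_ isT).
    lia.
  - by move=> i Hi; rewrite /lam'; case: eqP => [->|]; [lia | move=> _; apply: Hsub].
  - move=> i j Hij; rewrite /lam' /f'.
    have := Hf i j Hij; move: Hij => /andP[Hij Hjr].
    by case: eqP => Hi; case: eqP => Hj; subst; rewrite -?subn1; lia.
rewrite [X in _ = _ * X](_ : _ = 0) ?mulr0 //.
case: (ltnP (mu k) (lam k)) Hv => [Hv1 | Hv1] Hv.
  move: Hv => /= /negbT; rewrite negb_imply -leqNgt => /andP[Hk1 Hle].
  have H4 : (lam k.+1 <= lam k)%N by apply: Hlam; rewrite leqnSn Hk1.
  have H6 : (f k.+1 < f k)%N by apply: Hlast; rewrite ltnSn Hk1.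
  have Hfk1 : f k.+1 = (f k).-1.
    have := Hf k k.+1; rewrite ltnSn Hk1 => /(_ isT); lia.
  apply: (@determinant_alternate _ _ _ (Ordinal kr) (Ordinal Hk1)).
    by rewrite -(inj_eq val_inj) /= eq_sym; apply/negP => /eqP; lia.
  move=> j; rewrite !mxE /= eqxx.
  have -> : (k.+1 == k) = false by apply/negbTE; apply/eqP; lia.
  rewrite Hfk1; congr (e_bar _ _ _ _ _); rewrite -?subn1; lia.
apply: (det_zero_block (k := Ordinal kr)) => i j /= Hki Hjk.
rewrite mxE /e_bar ifT //.
have := Hmu j k; rewrite Hjk kr => /(_ isT) Hmj.
have : (lam i <= lam k)%N by apply: Hlam; rewrite Hki ltn_ord.
case: eqP => Hi; lia.
Qed.

End Main.

Theorem mainTheorem11 (R : comNzRingType) (r : nat) (lam mu f : nat -> nat)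
    (z : nat -> R) (b : int -> R)
    (Hlam : forall i j : nat, (i <= j < r)%N -> (lam j <= lam i)%N)
    (Hlen : forall i : nat, (i < r)%N -> (0 < lam i)%N)
    (Hmu : forall i j : nat, (i <= j < r)%N -> (mu j <= mu i)%N)
    (Hsub : forall i : nat, (i < r)%N -> (mu i <= lam i)%N)
    (Hf : forall i j : nat, (i < j < r)%N ->
       (lam j)%:Z - (j.+1)%:Z - (f j)%:Z <= (lam i)%:Z - (i.+1)%:Z - (f i)%:Z) :
  stilde r lam mu f z b =
  \det (\matrix_(i < r, j < r)
     e_bar (f i)%:Z
           ((lam i)%:Z - (mu j)%:Z + (j.+1)%:Z - (i.+1)%:Z - (f i)%:Z - 1)
           ((lam i)%:Z - (mu j)%:Z + (j.+1)%:Z - (i.+1)%:Z)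
           z (tau ((j.+1)%:Z - (mu j)%:Z - 1) b)).
Proof.
have M0 : (0 < val_bound r f)%N by [].
have HL : forall i, (i < r)%N -> (lam i < col_bound r lam)%N.
  by move=> i Hi; rewrite /col_bound ltnS (leq_bigmax (Ordinal Hi)).
have HM : forall i, (i < r)%N -> (f i < val_bound r f)%N.
  by move=> i Hi; rewrite /val_bound ltnS (leq_bigmax (Ordinal Hi)).
exact: (gen z b M0 (n := (\sum_(i < r) f i)%N) erefl HL HM Hlam Hmu Hsub Hf).
Qed.
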